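(* Let $\mathcal E$ be a product system and let $F^1,F^2$ be inclusion subsystems of $\mathcal E$. For $t>0$ let $$G_t=\overline{\mathrm{span}}\{x\otimes y:x\in\mathcal E_r\ominus F^1_r,\ y\in\mathcal E_{t-r}\ominus F^2_{t-r}\ \text{for some }0<r<t\}$$ and $G'_t=\mathcal E_t\ominus G_t$. Then $G'=(G'_t)_{t>0}$ is an inclusion subsystem of $\mathcal E$ (i.e. $G'_{s+t}\subset G'_s\otimes G'_t$ under $\mathcal E_{s+t}\cong\mathcal E_s\otimes\mathcal E_t$) and $F^1_t\subset G'_t$, $F^2_t\subset G'_t$ for all $t>0$.
   Context: A product system is a measurable family of separable Hilbert spaces $(\mathcal E_t)_{t>0}$ with associative unitaries $V_{s,t}:\mathcal E_{s+t}\to\mathcal E_s\otimes\mathcal E_t$, used to identify $\mathcal E_{s+t}\cong\mathcal E_s\otimes\mathcal E_t$. An inclusion subsystem is a family of closed subspaces $F_t\subset\mathcal E_t$ with $V_{s,t}(F_{s+t})\subset F_s\otimes F_t$ for all $s,t>0$; with the restricted maps it is an inclusion system (family of Hilbert spaces with associative isometries $E_{s+t}\to E_s\otimes E_t$). *)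

(* Defs.v *)
From HB Require Import structures.
From mathcomp Require Import all_boot all_order all_algebra.
From mathcomp Require Import reals complex.
Set Implicit Arguments. Unset Strict Implicit. Unset Printing Implicit Defensive.
Import Order.TTheory GRing.Theory Num.Theory.
Local Open Scope ring_scope.

Notation Cx R := (complex R).

Section Hilbert.
Variables (R : realType) (V : lmodType (Cx R)) (ip : V -> V -> Cx R).

Definition d2 (x y : V) : Cx R := ip (x - y) (x - y).

Definition inner_product : Prop :=
  [/\ forall (a : Cx R) (x y z : V), ip (a *: x + y) z = a * ip x z + ip y z,
      forall x y : V, ip y x = (ip x y)^*,
      forall x : V, 0 <= ip x x
    & forall x : V, ip x x = 0 -> x = 0].

Definition complete_ip : Prop :=
  forall u : nat -> V,
    (forall e : Cx R, 0 < e -> exists N, forall n k, (N <= n)%N -> (N <= k)%N ->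
        d2 (u n) (u k) < e) ->
    exists x : V, forall e : Cx R, 0 < e -> exists N, forall n, (N <= n)%N ->
        d2 (u n) x < e.

Definition separable_ip : Prop :=
  exists d : nat -> V, forall (x : V) (e : Cx R), 0 < e -> exists n, d2 x (d n) < e.

Definition hilbert_space : Prop := [/\ inner_product, complete_ip & separable_ip].

Definition closure_ip (S : V -> Prop) (x : V) : Prop :=
  forall e : Cx R, 0 < e -> exists y, S y /\ d2 x y < e.

Definition lspan (S : V -> Prop) (x : V) : Prop :=
  exists (n : nat) (c : 'I_n -> Cx R) (v : 'I_n -> V),
    (forall i, S (v i)) /\ x = \sum_(i < n) c i *: v i.

Definition cspan (S : V -> Prop) : V -> Prop := closure_ip (lspan S).

Definition closed_subspace (S : V -> Prop) : Prop :=
  [/\ S 0,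
      forall (a : Cx R) x y, S x -> S y -> S (a *: x + y)
    & forall x, closure_ip S x -> S x].

Definition orthc (S : V -> Prop) (x : V) : Prop := forall y, S y -> ip x y = 0.

End Hilbert.

Definition tcast (R : realType) (E : R -> lmodType (Cx R)) (a b : R) (H : a = b)
  (v : E a) : E b := eq_rect a (fun u => (E u : Type)) v b H.

(* A product system: family (E_t)_{t>0} of separable Hilbert spaces, with
   the identification E_{s+t} ~= E_s (x) E_t encoded by the map
   m s t : E_s -> E_t -> E_{s+t},  m s t x y = V_{s,t}^{-1}(x (x) y).
   V_{s,t} unitary  <=>  m is bilinear, preserves inner products of
   elementary tensors, and has a total (densely spanning) range.
   Associativity of V  <=>  associativity of m. *)
Definition product_system (R : realType) (E : R -> lmodType (Cx R))
  (ip : forall t, E t -> E t -> Cx R) (m : forall s t, E s -> E t -> E (s + t)) : Prop :=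
  [/\ forall t, 0 < t -> hilbert_space (ip t),
      forall s t, 0 < s -> 0 < t ->
        [/\ forall (a : Cx R) x x' y, m s t (a *: x + x') y = a *: m s t x y + m s t x' y,
            forall (a : Cx R) x y y', m s t x (a *: y + y') = a *: m s t x y + m s t x y',
            forall x x' y y', ip (s + t) (m s t x y) (m s t x' y') = ip s x x' * ip t y y'
          & forall z, cspan (ip (s + t)) (fun w => exists x y, w = m s t x y) z]
    & forall r s t, 0 < r -> 0 < s -> 0 < t -> forall x y z,
        tcast (addrA r s t) (m r (s + t) x (m s t y z)) = m (r + s) t (m r s x y) z].

(* Inclusion subsystem: closed subspaces F_t of E_t with
   V_{s,t}(F_{s+t}) ⊂ F_s (x) F_t, where F_s (x) F_t is the closed span of
   the elementary tensors x (x) y, x in F_s, y in F_t. *)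
Definition inclusion_subsystem (R : realType) (E : R -> lmodType (Cx R))
  (ip : forall t, E t -> E t -> Cx R) (m : forall s t, E s -> E t -> E (s + t))
  (F : forall t, E t -> Prop) : Prop :=
  (forall t, 0 < t -> closed_subspace (ip t) (F t)) /\
  (forall s t, 0 < s -> 0 < t -> forall z, F (s + t) z ->
     cspan (ip (s + t)) (fun w => exists x y, [/\ F s x, F t y & w = m s t x y]) z).

Definition Gsub (R : realType) (E : R -> lmodType (Cx R))
  (ip : forall t, E t -> E t -> Cx R) (m : forall s t, E s -> E t -> E (s + t))
  (F1 F2 : forall t, E t -> Prop) (t : R) : E t -> Prop :=
  cspan (ip t) (fun w => exists (r u : R) (H : r + u = t),
     [/\ 0 < r, 0 < u &
       exists x y, [/\ orthc (ip r) (F1 r) x, orthc (ip u) (F2 u) y &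
                       w = tcast H (m r u x y)]]).

Arguments Gsub {R E} ip m F1 F2 t.

Definition Gprime (R : realType) (E : R -> lmodType (Cx R))
  (ip : forall t, E t -> E t -> Cx R) (m : forall s t, E s -> E t -> E (s + t))
  (F1 F2 : forall t, E t -> Prop) (t : R) : E t -> Prop :=
  orthc (ip t) (@Gsub R E ip m F1 F2 t).
Arguments Gprime {R E} ip m F1 F2 t.

(* Main.v *)
Require Import Defs.
From HB Require Import structures.
From mathcomp Require Import all_boot all_order all_algebra.
From mathcomp Require Import reals complex.
From mathcomp Require Import ring lra classical_sets.
From Stdlib Require Import IndefiniteDescription.
Set Implicit Arguments. Unset Strict Implicit. Unset Printing Implicit Defensive.
Import Order.TTheory GRing.Theory Num.Theory.
Local Open Scope complex_scope.
Local Open Scope ring_scope.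

Lemma inv_small (R : realType) (e : R) : 0 < e ->
  exists K, forall n, (K <= n)%N -> n.+1%:R^-1 < e.
Proof.
move=> e0; exists (Num.Def.archi_bound e^-1) => n Kn.
have ei : 0 <= e^-1 by rewrite invr_ge0 ltW.
have h := archi_boundP ei.
have h2 : e^-1 < n.+1%:R.
  apply: (lt_le_trans h); rewrite ler_nat; exact: (leq_trans Kn).
rewrite -(invrK e) ltf_pV2 ?posrE ?invr_gt0 //.
Qed.

Section IP.
Variables (R : realType) (V : lmodType (Cx R)) (ip : V -> V -> Cx R).
Hypothesis Hip : inner_product ip.

Lemma ip_lin a x y z : ip (a *: x + y) z = a * ip x z + ip y z.
Proof. by case: Hip => h _ _ _; apply: h. Qed.
Lemma ipC x y : ip y x = (ip x y)^*.
Proof. by case: Hip => _ h _ _; apply: h. Qed.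
Lemma ip_ge0 x : 0 <= ip x x.
Proof. by case: Hip => _ _ h _; apply: h. Qed.
Lemma ip_eq0 x : ip x x = 0 -> x = 0.
Proof. by case: Hip => _ _ _ h; apply: h. Qed.

Lemma ip0l z : ip 0 z = 0.
Proof.
have := ip_lin 1 0 0 z; rewrite scaler0 addr0 mul1r => h.
by apply: (addrI (ip 0 z)); rewrite addr0 -h.
Qed.
Lemma ipDl x y z : ip (x + y) z = ip x z + ip y z.
Proof. by rewrite -[x]scale1r ip_lin mul1r scale1r. Qed.
Lemma ipZl a x z : ip (a *: x) z = a * ip x z.
Proof. by rewrite -[a *: x]addr0 ip_lin ip0l addr0. Qed.
Lemma ipNl x z : ip (- x) z = - ip x z.
Proof. by rewrite -scaleN1r ipZl mulN1r. Qed.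
Lemma ipBl x y z : ip (x - y) z = ip x z - ip y z.
Proof. by rewrite ipDl ipNl. Qed.
Lemma ip0r z : ip z 0 = 0.
Proof. by rewrite ipC ip0l conjC0. Qed.
Lemma ipDr x y z : ip z (x + y) = ip z x + ip z y.
Proof. by rewrite (ipC x z) (ipC y z) (ipC (x+y) z) ipDl rmorphD. Qed.
Lemma ipZr a x z : ip z (a *: x) = a^* * ip z x.
Proof. by rewrite (ipC x z) (ipC (a *: x) z) ipZl rmorphM. Qed.
Lemma ipNr x z : ip z (- x) = - ip z x.
Proof. by rewrite (ipC x z) (ipC (- x) z) ipNl rmorphN. Qed.
Lemma ipBr x y z : ip z (x - y) = ip z x - ip z y.
Proof. by rewrite ipDr ipNr. Qed.

Lemma ip_suml n (c : 'I_n -> Cx R) (v : 'I_n -> V) z :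
  ip (\sum_(i < n) c i *: v i) z = \sum_(i < n) c i * ip (v i) z.
Proof.
elim: n c v => [|n IH] c v; first by rewrite !big_ord0 ip0l.
by rewrite !big_ord_recr /= ipDl ipZl IH.
Qed.
Lemma ip_sumr n (c : 'I_n -> Cx R) (v : 'I_n -> V) z :
  ip z (\sum_(i < n) c i *: v i) = \sum_(i < n) (c i)^* * ip z (v i).
Proof.
elim: n c v => [|n IH] c v; first by rewrite !big_ord0 ip0r.
by rewrite !big_ord_recr /= ipDr ipZr IH.
Qed.

Definition N x := complex.Re (ip x x).
Lemma ipxx x : ip x x = (N x)%:C.
Proof.
have h := ip_ge0 x; rewrite /N.
by rewrite [ip x x]complexE (ger0_Im h) mulr0 addr0.
Qed.
Lemma N_ge0 x : 0 <= N x.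
Proof. by rewrite -ler0c -ipxx ip_ge0. Qed.
Lemma N_eq0 x : N x = 0 -> x = 0.
Proof. by move=> h; apply: ip_eq0; rewrite ipxx h. Qed.
Lemma N0 : N 0 = 0.
Proof. by rewrite /N ip0l. Qed.
Lemma NN x : N (- x) = N x.
Proof. by rewrite /N ipNl ipNr opprK. Qed.
Lemma NB x y : N (x - y) = N (y - x).
Proof. by rewrite -NN opprB. Qed.

Definition sqm (z : Cx R) := complex.Re z ^+ 2 + complex.Im z ^+ 2.
Lemma sqmE z : z * z^* = (sqm z)%:C.
Proof. by rewrite -normCK /sqm add_Re2_Im2. Qed.
Lemma sqm_ge0 z : 0 <= sqm z.
Proof. by rewrite /sqm; nra. Qed.
Lemma sqm_eq0 z : sqm z = 0 -> z = 0.
Proof.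
case: z => a b; rewrite /sqm /= => h.
have ha : a = 0 by nra.
have hb : b = 0 by nra.
by rewrite ha hb.
Qed.
Lemma sqm0 : sqm 0 = 0.
Proof. by rewrite /sqm /= expr0n /= addr0. Qed.
Lemma sqmD x y : sqm (x + y) <= 2 * sqm x + 2 * sqm y.
Proof. case: x => a b; case: y => c d; rewrite /sqm /=.
have := sqr_ge0 (a - c); have := sqr_ge0 (b - d); nra. Qed.

Lemma conj_divR (p : Cx R) (n : R) : (p / n%:C)^* = p^* / n%:C.
Proof.
rewrite rmorphM fmorphV; congr (_ * (_)^-1).
by apply: conj_Creal; rewrite complex_real.
Qed.

Lemma N_exp a b : N b != 0 ->
  N (a - (ip a b / ip b b) *: b) = N a - sqm (ip a b) / N b.
Proof.
move=> nz.
have cn : ((N b)%:C)^* = (N b)%:C := conjc_real _.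
have nzC : (N b)%:C != 0 by apply: contra nz => /eqP[->].
apply: (@complexI R).
have -> : ((N a - sqm (ip a b) / N b)%:C : Cx R) =
    (N a)%:C - ip a b * (ip a b)^* / (N b)%:C.
  by rewrite sqmE rmorphB rmorphM fmorphV.
rewrite -(ipxx (a - _)) ipBl !ipBr !ipZl !ipZr (ipC a b) !ipxx.
rewrite conj_divR.
by field.
Qed.

Lemma CS a b : sqm (ip a b) <= N a * N b.
Proof.
have [h|nz] := eqVneq (N b) 0.
  by rewrite (@N_eq0 b h) ip0r sqm0 N0 mulr0.
have := N_ge0 (a - (ip a b / ip b b) *: b); rewrite N_exp // subr_ge0.
have pos : 0 < N b by rewrite lt0r nz N_ge0.
by rewrite ler_pdivrMr.
Qed.

Lemma small0 (r K : R) : 0 <= K -> (forall e, 0 < e -> r <= e * K) -> r <= 0.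
Proof.
move=> K0 h; rewrite leNgt; apply/negP => r0.
have := h (r / (K + 1)) (divr_gt0 r0 (ltr_pwDr ltr01 K0)).
rewrite mulrAC ler_pdivlMr ?(ltr_pwDr ltr01 K0) //; nra.
Qed.

Lemma d2E x y : d2 ip x y = (N (x - y))%:C.
Proof. by rewrite /d2 ipxx. Qed.

Lemma posC (e : Cx R) : 0 < e -> e = (complex.Re e)%:C /\ 0 < complex.Re e.
Proof.
case: e => a b; rewrite ltcE /= => /andP[/eqP -> h]; split => //.
Qed.

Lemma orth_closure A x g : closure_ip ip A x -> (forall v, A v -> ip v g = 0) ->
  ip x g = 0.
Proof.
move=> cl orth; apply: sqm_eq0; apply/eqP; rewrite eq_le sqm_ge0 andbT.
apply: (@small0 (sqm (ip x g)) (N g) (N_ge0 g)) => e e0.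
have e0C : 0 < e%:C by rewrite ltcR.
have [v [Av]] := cl _ e0C.
rewrite d2E ltcR => lt.
have -> : ip x g = ip (x - v) g by rewrite ipBl (orth v Av) subr0.
apply: (le_trans (CS _ _)); apply: ler_wpM2r; [exact: N_ge0 | exact: ltW].
Qed.

Lemma lspan0 (S : V -> Prop) : lspan S 0.
Proof.
by exists 0%N, (fun _ => 0), (fun _ => 0); split => [[]//|]; rewrite big_ord0.
Qed.

Lemma lspan1 (S : V -> Prop) v : S v -> lspan S v.
Proof.
move=> Sv; exists 1%N, (fun _ => 1), (fun _ => v); split => //.
by rewrite big_ord1 scale1r.
Qed.

Lemma lspan_lin (S : V -> Prop) a x y : lspan S x -> lspan S y -> lspan S (a *: x + y).
Proof.
move=> [n1 [c1 [v1 [S1 ->]]]] [n2 [c2 [v2 [S2 ->]]]].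
exists (n1 + n2)%N,
  (fun i => match split i with inl j => a * c1 j | inr k => c2 k end),
  (fun i => match split i with inl j => v1 j | inr k => v2 k end).
split.
  by move=> i; case: (split i).
rewrite big_split_ord /= scaler_sumr; congr (_ + _); apply: eq_bigr => i _.
  have -> : split (lshift n2 i) = inl i := unsplitK (inl _).
  by rewrite scalerA.
by have -> : split (rshift n1 i) = inr i := unsplitK (inr _).
Qed.

Lemma orth_lspan (S : V -> Prop) g y : (forall v, S v -> ip v g = 0) -> lspan S y -> ip y g = 0.
Proof.
move=> orth [n [c [v [Sv ->]]]]; rewrite ip_suml big1 // => i _.
by rewrite orth ?mulr0.
Qed.

Lemma orth_cspan (S : V -> Prop) g y : (forall v, S v -> ip v g = 0) -> cspan ip S y -> ip y g = 0.
Proof.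
move=> orth cl; apply: (@orth_closure (lspan S) y g cl) => v; exact: orth_lspan.
Qed.

Lemma orthc_closed (S : V -> Prop) : closed_subspace ip (orthc ip S).
Proof.
split.
- by move=> y _; rewrite ip0l.
- by move=> a x y ox oy z Sz; rewrite ip_lin ox // oy // mulr0 addr0.
- move=> x cl z Sz; apply: (@orth_closure (orthc ip S) x z cl) => v ov; exact: ov.
Qed.

Lemma par a b : N (a + b) + N (a - b) = 2 * N a + 2 * N b.
Proof.
apply: (@complexI R); rewrite !rmorphD !rmorphM /= -!ipxx.
rewrite !ipDl !ipDr !ipNl !ipNr.
rewrite rmorph_nat.
by ring.
Qed.

Lemma NZ a y : N (a *: y) = sqm a * N y.
Proof.
apply: (@complexI R); rewrite rmorphM /= -sqmE -!ipxx ipZl ipZr.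
by ring.
Qed.


Lemma proj (Hc : complete_ip ip) (S : V -> Prop) x :
  exists q, cspan ip S q /\ orthc ip (cspan ip S) (x - q).
Proof.
pose M := lspan S.
pose D : set R := fun r => exists v, M v /\ r = N (x - v).
have hD : has_inf D.
  split; first by exists (N (x - 0)), 0; split => //; exact: lspan0.
  by exists 0 => r [v [_ ->]]; exact: N_ge0.
pose d := inf D.
have dle : forall v, M v -> d <= N (x - v).
  by move=> v Mv; apply: (ge_inf hD.2); exists v.
have H : forall n : nat, exists v, M v /\ N (x - v) < d + n.+1%:R^-1.
  move=> n; have np : 0 < n.+1%:R^-1 :> R by rewrite invr_gt0 ltr0Sn.
  have [r [v [Mv ->]] lt] := inf_adherent np hD.
  by exists v.
pose u n := proj1_sig (constructive_indefinite_description _ (H n)).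
have hu n : M (u n) /\ N (x - u n) < d + n.+1%:R^-1.
  exact: (proj2_sig (constructive_indefinite_description _ (H n))).
have cauchy n k : N (u n - u k) <= 2 * n.+1%:R^-1 + 2 * k.+1%:R^-1.
  have [Mn ln] := hu n; have [Mk lk] := hu k.
  pose w := 2^-1 *: (u n + u k) + 0.
  have Mnk : M (u n + u k) by rewrite /M -[u n]scale1r; apply: lspan_lin.
  have Mw : M w by rewrite /M /w; apply: lspan_lin => //; exact: lspan0.
  have hw := dle w Mw.
  have hp := par (x - u n) (x - u k).
  have e1 : x - u n + (x - u k) = 2 *: (x - w).
    rewrite /w addr0 scalerBr scalerA mulfV ?pnatr_eq0 // scale1r scaler_nat.
    by rewrite mulr2n opprD !addrA [x - u n + x]addrAC.
  have e2 : x - u n - (x - u k) = - (u n - u k).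
    by rewrite !opprB addrC addrA subrK.
  rewrite e1 e2 NN NZ in hp.
  have s2 : sqm 2 = 4 by rewrite /sqm /=; ring.
  rewrite s2 in hp. move: hw hp ln lk. rewrite -/w. set A := N (x - w). set B := N (u n - u k). set C1 := N (x - u n). set C2 := N (x - u k). set a1 := n.+1%:R^-1. set a2 := k.+1%:R^-1.  clearbody A B C1 C2 d a1 a2. move=> hw hp ln lk. have hw2 : 0 <= A - d by rewrite subr_ge0. lra.
have hc : exists q, forall e, 0 < e -> exists K, forall n, (K <= n)%N ->
    d2 ip (u n) q < e.
  apply: Hc => e /posC [-> ep].
  have e4 : 0 < complex.Re e / 4 by rewrite divr_gt0.
  have [K hK] := @inv_small _ _ e4.
  exists K => n k Kn Kk; rewrite d2E ltcR.
  apply: (le_lt_trans (cauchy n k)).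
  have := hK n Kn; have := hK k Kk.
  set a1 := n.+1%:R^-1; set a2 := k.+1%:R^-1; set E := complex.Re e.
  move=> *; lra.
have [q hq] := hc.
have hq' : forall ep, 0 < ep -> exists K, forall n, (K <= n)%N -> N (u n - q) < ep.
  move=> ep ep0; have epC : 0 < ep%:C by rewrite ltcR.
  have [K hK] := hq _ epC; exists K => n Kn.
  by move: (hK n Kn); rewrite d2E ltcR.
exists q; split.
  move=> e /posC [-> ep]; have [K hK] := hq' _ ep.
  exists (u K); split; first by case: (hu K).
  by rewrite d2E ltcR NB; apply: hK.
have orthM : forall g, M g -> ip (x - q) g = 0.
  move=> g Mg.
  have [g0|gnz] := eqVneq (N g) 0; first by rewrite (@N_eq0 g g0) ip0r.
  have gpos : 0 < N g by rewrite lt0r gnz N_ge0.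
  have hp n : sqm (ip (x - u n) g) <= n.+1%:R^-1 * N g.
    have [Mn ln] := hu n.
    pose lam := ip (x - u n) g / ip g g.
    have Mv : M (u n + lam *: g) by rewrite /M addrC; apply: lspan_lin.
    have := dle _ Mv.
    have -> : x - (u n + lam *: g) = (x - u n) - lam *: g by rewrite opprD addrA.
    rewrite N_exp // => h.
    rewrite -ler_pdivrMr //.
    move: h ln; set P := sqm _ / _; set a := n.+1%:R^-1; set B := N _.
    move=> h ln; have h2 : 0 <= B - P - d by rewrite subr_ge0.
    lra.
  apply: sqm_eq0; apply/eqP; rewrite eq_le sqm_ge0 andbT.
  apply: (@small0 _ (4 * N g)); first by rewrite mulr_ge0 // N_ge0.
  move=> e e0.
  have [K1 hK1] := @inv_small _ _ e0.
  have [K2 hK2] := hq' e e0.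
  pose n := maxn K1 K2.
  have h1 := hK1 n (leq_maxl _ _).
  have h2 := hK2 n (leq_maxr _ _).
  have -> : ip (x - q) g = ip (x - u n) g + ip (u n - q) g.
    by rewrite -ipDl addrA subrK.
  apply: (le_trans (sqmD _ _)).
  have h3 := hp n; have h4 := CS (u n - q) g.
  have h5 : n.+1%:R^-1 * N g <= e * N g by rewrite ler_wpM2r ?N_ge0 // ltW.
  have h6 : N (u n - q) * N g <= e * N g by rewrite ler_wpM2r ?N_ge0 // ltW.
  move: h3 h4 h5 h6; set P1 := sqm _; set P2 := sqm _.
  set X1 := _ * N g; set X2 := _ * N g; set X3 := e * N g.
  have -> : e * (4 * N g) = 4 * X3 by rewrite /X3; ring.
  move=> h3 h4 h5 h6; have k1 := le_trans h3 h5; have k2 := le_trans h4 h6.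
  clear -k1 k2; move: X3 k1 k2 => X3 k1 k2. lra.
move=> y cy; rewrite (ipC y (x - q)).
have -> : ip y (x - q) = 0; last by rewrite conjC0.
apply: (@orth_cspan S (x - q) y _ cy) => v Sv.
by rewrite (ipC (x - q) v) orthM ?conjC0 //; apply: lspan1.
Qed.
End IP.

Section Map.
Variables (R : realType) (V W : lmodType (Cx R)) (ipV : V -> V -> Cx R)
  (ipW : W -> W -> Cx R).
Hypotheses (HV : inner_product ipV) (HW : inner_product ipW).
Variable f : V -> W.
Hypothesis flin : forall a x y, f (a *: x + y) = a *: f x + f y.
Local Notation NV := (@N R V ipV).
Local Notation NW := (@N R W ipW).

Lemma f0 : f 0 = 0.
Proof.
have := flin 1 0 0; rewrite scaler0 addr0 scale1r => h.
by apply: (addrI (f 0)); rewrite addr0 -h.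
Qed.
Lemma fB x y : f (x - y) = f x - f y.
Proof. by have := flin (-1) y x; rewrite !scaleN1r => h; rewrite addrC h addrC. Qed.
Lemma f_sum n (c : 'I_n -> Cx R) (v : 'I_n -> V) :
  f (\sum_(i < n) c i *: v i) = \sum_(i < n) c i *: f (v i).
Proof.
elim: n c v => [|n IH] c v; first by rewrite !big_ord0 f0.
by rewrite !big_ord_recr /= [in LHS]addrC flin IH addrC.
Qed.

Lemma cspan_map (K : R) (S : V -> Prop) (T : W -> Prop) :
  0 <= K -> (forall x, NW (f x) = NV x * K) ->
  (forall v, S v -> T (f v)) -> forall x, cspan ipV S x -> cspan ipW T (f x).
Proof.
move=> K0 fN ST x cx e /posC [-> ep].
have dp : 0 < complex.Re e / (K + 1) by rewrite divr_gt0 // ltr_pwDr.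
have dpC : 0 < (complex.Re e / (K + 1))%:C by rewrite ltcR.
have [v [[n [c [w [Sw ->]]]]]] := cx _ dpC.
rewrite d2E // ltcR => lt.
exists (\sum_(i < n) c i *: f (w i)); split.
  by exists n, c, (fun i => f (w i)); split => // i; apply: ST.
rewrite d2E // ltcR -f_sum -fB fN.
rewrite ltr_pdivlMr ?ltr_pwDr // in lt.
set X := NV _ in lt *.
have X0 : 0 <= X by rewrite /X; apply: (N_ge0 HV).
nra.
Qed.
End Map.

Section Pyth.
Variables (R : realType) (V : lmodType (Cx R)) (ip : V -> V -> Cx R).
Hypothesis Hip : inner_product ip.
Lemma pyth x y : ip y x = 0 -> N ip (x - y) = N ip x + N ip y.
Proof.
move=> h.
have e : ip (x - y) (x - y) = ip x x + ip y y.
  rewrite (ipBl Hip) !(ipBr Hip) h (ipC Hip y x) h conjC0.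
  by rewrite !subr0 opprB subr0.
by rewrite /N e; case: (ip x x) => ? ?; case: (ip y y).
Qed.
End Pyth.

Lemma tcast_comp (R : realType) (E : R -> lmodType (Cx R)) a b c
  (H1 : a = b) (H2 : b = c) (v : E a) :
  Defs.tcast H2 (Defs.tcast H1 v) = Defs.tcast (eq_trans H1 H2) v.
Proof. by destruct H2. Qed.

Lemma tcast_sym (R : realType) (E : R -> lmodType (Cx R)) a b
  (H : a = b) (v : E a) : Defs.tcast (esym H) (Defs.tcast H v) = v.
Proof. by destruct H. Qed.

Lemma m_tcast_l (R : realType) (E : R -> lmodType (Cx R))
  (m : forall s t, E s -> E t -> E (s + t)) r u s t (H : r + u = s) v y :
  m s t (Defs.tcast H v) y = Defs.tcast (f_equal (fun z => z + t) H) (m (r + u) t v y).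
Proof. by destruct H. Qed.

Lemma m_tcast_r (R : realType) (E : R -> lmodType (Cx R))
  (m : forall s t, E s -> E t -> E (s + t)) s r u t (H : r + u = t) x v :
  m s t x (Defs.tcast H v) = Defs.tcast (f_equal (fun z => s + z) H) (m s (r + u) x v).
Proof. by destruct H. Qed.

Unset Implicit Arguments.
Section Main.
Variables (R : realType) (E : R -> lmodType (Cx R))
  (ip : forall t, E t -> E t -> Cx R) (m : forall s t, E s -> E t -> E (s + t))
  (F1 F2 : forall t, E t -> Prop).
Hypotheses (PS : product_system ip m) (I1 : inclusion_subsystem ip m F1)
  (I2 : inclusion_subsystem ip m F2).

Lemma Hip (t : R) : 0 < t -> inner_product (ip t).
Proof. by case: PS => h _ _ tp; case: (h t tp). Qed.
Arguments Hip [t].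
Lemma Hcomp (t : R) : 0 < t -> complete_ip (ip t).
Proof. by case: PS => h _ _ tp; case: (h t tp). Qed.

Arguments Hcomp [t].
Lemma mDl (s t : R) : 0 < s -> 0 < t -> forall a x x' y,
  m s t (a *: x + x') y = a *: m s t x y + m s t x' y.
Proof. by case: PS => _ h _ hs ht; case: (h s t hs ht). Qed.
Lemma mDr (s t : R) : 0 < s -> 0 < t -> forall a x y y',
  m s t x (a *: y + y') = a *: m s t x y + m s t x y'.
Proof. by case: PS => _ h _ hs ht; case: (h s t hs ht). Qed.
Lemma mip (s t : R) : 0 < s -> 0 < t -> forall x x' y y',
  ip (s + t) (m s t x y) (m s t x' y') = ip s x x' * ip t y y'.
Proof. by case: PS => _ h _ hs ht; case: (h s t hs ht). Qed.
Lemma mtot (s t : R) : 0 < s -> 0 < t -> forall z,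
  cspan (ip (s + t)) (fun w => exists x y, w = m s t x y) z.
Proof. by case: PS => _ h _ hs ht; case: (h s t hs ht). Qed.
Lemma massoc (r s t : R) : 0 < r -> 0 < s -> 0 < t -> forall x y z,
  Defs.tcast (addrA r s t) (m r (s + t) x (m s t y z)) = m (r + s) t (m r s x y) z.
Proof. by case: PS => _ _ h; apply: h. Qed.

Lemma mN (s t : R) (x : E s) (y : E t) : 0 < s -> 0 < t ->
  N (ip (s + t)) (m s t x y) = N (ip s) x * N (ip t) y.
Proof.
move=> hs ht; rewrite /N mip // (ipxx (Hip hs)) (ipxx (Hip ht)).
by rewrite -rmorphM.
Qed.

Definition gens (t : R) (w : E t) := exists (r u : R) (H : r + u = t),
     [/\ 0 < r, 0 < u &
       exists x y, [/\ orthc (ip r) (F1 r) x, orthc (ip u) (F2 u) y &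
                       w = Defs.tcast H (m r u x y)]].

Lemma GsubE (t : R) : Gsub ip m F1 F2 t = cspan (ip t) (gens t).
Proof. by []. Qed.

Lemma orth_F2_l (u t : R) (b : E u) (y : E t) : 0 < u -> 0 < t -> orthc (ip u) (F2 u) b ->
  orthc (ip (u + t)) (F2 (u + t)) (m u t b y).
Proof.
move=> hu ht ob z Fz.
have hut : 0 < u + t by rewrite addr_gt0.
rewrite (ipC (Hip hut) z).
have -> : ip (u + t) z (m u t b y) = 0; last by rewrite conjC0.
apply: (orth_cspan (Hip hut) _ (I2.2 u t hu ht z Fz)).
move=> v0 [f [g [Ff Fg ->]]].
by rewrite mip // (ipC (Hip hu) b f) ob // conjC0 mul0r.
Qed.

Lemma orth_F1_r (s r : R) (x : E s) (a : E r) : 0 < s -> 0 < r -> orthc (ip r) (F1 r) a ->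
  orthc (ip (s + r)) (F1 (s + r)) (m s r x a).
Proof.
move=> hs hr oa z Fz.
have hsr : 0 < s + r by rewrite addr_gt0.
rewrite (ipC (Hip hsr) z).
have -> : ip (s + r) z (m s r x a) = 0; last by rewrite conjC0.
apply: (orth_cspan (Hip hsr) _ (I1.2 s r hs hr z Fz)).
move=> v0 [f [g [Ff Fg ->]]].
by rewrite mip // (ipC (Hip hr) a g) oa // conjC0 mulr0.
Qed.

Lemma gens_l (s t : R) (y : E t) (w : E s) : 0 < s -> 0 < t -> gens s w -> gens (s + t) (m s t w y).
Proof.
move=> hs ht [r [u [H [hr hu [a [b [oa ob ->]]]]]]].
exists r, (u + t), (eq_trans (addrA r u t) (f_equal (fun z => z + t) H)).
split => //; first by rewrite addr_gt0.
exists a, (m u t b y); split => //; first exact: orth_F2_l.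
by rewrite m_tcast_l -massoc // tcast_comp.
Qed.

Lemma gens_r (s t : R) (x : E s) (w : E t) : 0 < s -> 0 < t -> gens t w -> gens (s + t) (m s t x w).
Proof.
move=> hs ht [r [u [H [hr hu [a [b [oa ob ->]]]]]]].
exists (s + r), u, (eq_trans (esym (addrA s r u)) (f_equal (fun z => s + z) H)).
split => //; first by rewrite addr_gt0.
exists (m s r x a), b; split => //; first exact: orth_F1_r.
rewrite m_tcast_r -tcast_comp; congr (Defs.tcast _ _).
by rewrite -massoc // tcast_sym.
Qed.

Lemma Gsub_l (s t : R) (q : E s) (y : E t) : 0 < s -> 0 < t -> Gsub ip m F1 F2 s q ->
  Gsub ip m F1 F2 (s + t) (m s t q y).
Proof.
move=> hs ht; rewrite !GsubE.
have hst : 0 < s + t by rewrite addr_gt0.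
apply: (@cspan_map _ _ _ _ _ (Hip hs) (Hip hst) (fun x => m s t x y) _ (N (ip t) y)).
- by move=> a x x'; rewrite mDl.
- exact: N_ge0 (Hip ht) y.
- by move=> x; rewrite mN.
- by move=> v gv; apply: gens_l.
Qed.

Lemma Gsub_r (s t : R) (x : E s) (q : E t) : 0 < s -> 0 < t -> Gsub ip m F1 F2 t q ->
  Gsub ip m F1 F2 (s + t) (m s t x q).
Proof.
move=> hs ht; rewrite !GsubE.
have hst : 0 < s + t by rewrite addr_gt0.
apply: (@cspan_map _ _ _ _ _ (Hip ht) (Hip hst) (fun y => m s t x y) _ (N (ip s) x)).
- by move=> a y y'; rewrite mDr.
- exact: N_ge0 (Hip hs) x.
- by move=> y; rewrite mN // mulrC.
- by move=> v gv; apply: gens_r.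
Qed.


Lemma gen_orth1 (t : R) (x v : E t) : F1 t x -> gens t v -> ip t v x = 0.
Proof.
move=> + [r [u [H [hr hu [a [b [oa ob ->]]]]]]].
move: x; destruct H => x Fx; rewrite /Defs.tcast /=.
have hru : 0 < r + u by rewrite addr_gt0.
rewrite (ipC (Hip hru) x).
have -> : ip (r + u) x (m r u a b) = 0; last by rewrite conjC0.
apply: (orth_cspan (Hip hru) _ (I1.2 r u hr hu x Fx)).
move=> v0 [f [g [Ff Fg ->]]].
by rewrite mip // (ipC (Hip hr) a f) oa // conjC0 mul0r.
Qed.

Lemma gen_orth2 (t : R) (x v : E t) : F2 t x -> gens t v -> ip t v x = 0.
Proof.
move=> + [r [u [H [hr hu [a [b [oa ob ->]]]]]]].
move: x; destruct H => x Fx; rewrite /Defs.tcast /=.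
have hru : 0 < r + u by rewrite addr_gt0.
rewrite (ipC (Hip hru) x).
have -> : ip (r + u) x (m r u a b) = 0; last by rewrite conjC0.
apply: (orth_cspan (Hip hru) _ (I2.2 r u hr hu x Fx)).
move=> v0 [f [g [Ff Fg ->]]].
by rewrite mip // (ipC (Hip hu) b g) ob // conjC0 mulr0.
Qed.

Lemma F_Gp (t : R) (x : E t) : 0 < t ->
  (F1 t x -> Gprime ip m F1 F2 t x) /\ (F2 t x -> Gprime ip m F1 F2 t x).
Proof.
move=> tp; split => Fx y Gy; rewrite (ipC (Hip tp) y x).
  have -> : ip t y x = 0; last by rewrite conjC0.
  apply: (orth_cspan (Hip tp) _ Gy) => v gv; exact: gen_orth1 Fx gv.
have -> : ip t y x = 0; last by rewrite conjC0.
apply: (orth_cspan (Hip tp) _ Gy) => v gv; exact: gen_orth2 Fx gv.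
Qed.


Lemma Gp_incl (s t : R) : 0 < s -> 0 < t -> forall z, Gprime ip m F1 F2 (s + t) z ->
  cspan (ip (s + t)) (fun w => exists x y,
    [/\ Gprime ip m F1 F2 s x, Gprime ip m F1 F2 t y & w = m s t x y]) z.
Proof.
move=> hs ht z Gz.
have hst : 0 < s + t by rewrite addr_gt0.
have Ps (x : E s) : exists q, Gsub ip m F1 F2 s q /\ Gprime ip m F1 F2 s (x - q).
  exact: (proj (Hip hs) (Hcomp hs) (gens s) x).
have Pt (y : E t) : exists q, Gsub ip m F1 F2 t q /\ Gprime ip m F1 F2 t (y - q).
  exact: (proj (Hip ht) (Hcomp ht) (gens t) y).
pose Qs x := proj1_sig (constructive_indefinite_description _ (Ps x)).
have hQs x : Gsub ip m F1 F2 s (Qs x) /\ Gprime ip m F1 F2 s (x - Qs x).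
  exact: (proj2_sig (constructive_indefinite_description _ (Ps x))).
pose Qt y := proj1_sig (constructive_indefinite_description _ (Pt y)).
have hQt y : Gsub ip m F1 F2 t (Qt y) /\ Gprime ip m F1 F2 t (y - Qt y).
  exact: (proj2_sig (constructive_indefinite_description _ (Pt y))).
move=> e e0.
have [L [[n [c [v [Sv ->]]]] dL]] := mtot s t hs ht z e e0.
have Vxy i : exists p : E s * E t, v i = m s t p.1 p.2.
  by have [x [y ->]] := Sv i; exists (x, y).
pose XY i := proj1_sig (constructive_indefinite_description _ (Vxy i)).
have vE i : v i = m s t (XY i).1 (XY i).2.
  exact: (proj2_sig (constructive_indefinite_description _ (Vxy i))).
pose X i := (XY i).1; pose Y i := (XY i).2.
pose qx i := Qs (X i); pose px i := X i - qx i.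
pose qy i := Qt (Y i); pose py i := Y i - qy i.
pose w := \sum_(i < n) c i *: m s t (px i) (py i).
pose r := \sum_(i < n) c i *: (m s t (qx i) (Y i) + m s t (px i) (qy i)).
exists w; split.
  exists n, c, (fun i => m s t (px i) (py i)); split => // i.
  exists (px i), (py i); split => //; [exact: (hQs (X i)).2 | exact: (hQt (Y i)).2].
have Ldec : \sum_(i < n) c i *: v i = w + r.
  rewrite /w /r -big_split /=; apply: eq_bigr => i _.
  rewrite -scalerDr vE; congr (_ *: _).
  have eX : X i = 1 *: px i + qx i by rewrite scale1r subrK.
  have eY : Y i = 1 *: py i + qy i by rewrite scale1r subrK.
  rewrite -/(X i) -/(Y i).
  rewrite [in LHS]eX mDl // scale1r [in m s t (px i) _]eY mDr // scale1r.
  by rewrite -addrA (addrC (m s t (px i) (qy i))).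
have orthr : ip (s + t) r (z - w) = 0.
  rewrite /r (ip_suml (Hip hst)) big1 // => i _.
  have Gq : Gsub ip m F1 F2 (s + t) (m s t (qx i) (Y i)).
    exact: (Gsub_l s t (qx i) (Y i) hs ht (hQs (X i)).1).
  have Gq' : Gsub ip m F1 F2 (s + t) (m s t (px i) (qy i)).
    exact: (Gsub_r s t (px i) (qy i) hs ht (hQt (Y i)).1).
  have o1 : ip (s + t) (m s t (qx i) (Y i)) w = 0.
    rewrite /w (ip_sumr (Hip hst)) big1 // => j _.
    rewrite mip // (ipC (Hip hs) (px j) (qx i)).
    by rewrite ((hQs (X j)).2 (qx i) (hQs (X i)).1) conjC0 mul0r mulr0.
  have o2 : ip (s + t) (m s t (px i) (qy i)) w = 0.
    rewrite /w (ip_sumr (Hip hst)) big1 // => j _.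
    rewrite mip // (ipC (Hip ht) (py j) (qy i)).
    by rewrite ((hQt (Y j)).2 (qy i) (hQt (Y i)).1) conjC0 mulr0 mulr0.
  rewrite (ipDl (Hip hst)) !(ipBr (Hip hst)) o1 o2.
  rewrite (ipC (Hip hst) z (m s t (qx i) (Y i))) (Gz _ Gq).
  by rewrite (ipC (Hip hst) z (m s t (px i) (qy i))) (Gz _ Gq') conjC0 !subr0 addr0 mulr0.
move: dL; case/posC: e0 => -> ep; rewrite Ldec !(d2E (Hip hst)) !ltcR => dL.
have : N (ip (s + t)) (z - (w + r)) = N (ip (s + t)) (z - w) + N (ip (s + t)) r.
  by rewrite opprD addrA (pyth (Hip hst)).
have := N_ge0 (Hip hst) r.
move: dL; set A := N _ _; set B := N _ _; set C := N _ _.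
move=> *; lra.
Qed.

End Main.



Theorem mainTheorem17 (R : realType) (E : R -> lmodType (Cx R))
  (ip : forall t, E t -> E t -> Cx R) (m : forall s t, E s -> E t -> E (s + t))
  (F1 F2 : forall t, E t -> Prop) :
  product_system ip m ->
  inclusion_subsystem ip m F1 -> inclusion_subsystem ip m F2 ->
  inclusion_subsystem ip m (Gprime ip m F1 F2) /\
  (forall t, 0 < t -> forall x, (F1 t x -> Gprime ip m F1 F2 t x) /\
                                (F2 t x -> Gprime ip m F1 F2 t x)).
Proof.
move=> PS I1 I2; split; last first.
  by move=> t tp x; apply: (F_Gp R E ip m F1 F2 PS I1 I2 t x tp).
split.
  move=> t tp; exact: (orthc_closed (Hip R E ip m PS t tp) _).
by move=> s t hs ht z Gz; apply: (Gp_incl R E ip m F1 F2 PS I1 I2 s t hs ht z Gz).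
Qed.
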